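(* Let $S\subseteq 2^E$ be a powerful set with $|E|=n$ and $r_S(E)=n-1$. Then there is at most one element $e\in E$ with $r_S(\{e\})\neq 1$.
   Context: A set $S\subseteq 2^E$ ($E$ finite) is powerful if for every $X\subseteq E$ the number of members of $S$ contained in $X$ is a power of 2. Its rank function is $r_S(X)=\log_2\big(|S|/|\{Y\in S:Y\subseteq E\setminus X\}|\big)$. The order of $S$ is $|E|$ and the rank of $S$ is $r_S(E)$. *)

(* Defs.v *)
From mathcomp Require Import all_boot.
Set Implicit Arguments. Unset Strict Implicit. Unset Printing Implicit Defensive.

(* Ground set E is a finite type T; a family S ⊆ 2^E is a {set {set T}}. *)

Definition count_below (T : finType) (S : {set {set T}}) (X : {set T}) : nat :=
  #|[set Y in S | Y \subset X]|.

Definition powerful (T : finType) (S : {set {set T}}) : Prop :=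
  forall X : {set T}, exists k : nat, count_below S X = 2 ^ k.

(* r_S(X) = log2 (|S| / |{Y in S : Y ⊆ E \ X}|).  For powerful S both counts are
   powers of 2 (with the second dividing... being at most the first), so this equals
   log2 |S| - log2 |{Y in S : Y ⊆ E\X}|, with log2 computed exactly by trunc_log 2. *)
Definition rankS (T : finType) (S : {set {set T}}) (X : {set T}) : nat :=
  trunc_log 2 #|S| - trunc_log 2 (count_below S (~: X)).

(* Main.v *)
Require Import Defs.
From mathcomp Require Import all_boot.
From mathcomp Require Import zify.

Lemma quad (T : finType) (e f : T) (ef : e != f) (a b : bool) (P : {set {set T}}) :
  #|[set Y in P | (e \in Y == a) && (f \in Y == b)]| <= 2 ^ (#|T| - 2).
Proof.
  set D := [set Y in P | _].
  have inj : {in D &, injective (fun Y => Y :\: [set e; f])}.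
    move=> Y Z; rewrite !inE => /andP[_ /andP[/eqP hYe /eqP hYf]].
    move=> /andP[_ /andP[/eqP hZe /eqP hZf]] h.
    apply/setP => x. move/setP/(_ x): h. rewrite !inE.
    case: (eqVneq x e) => [->|_]; first by rewrite hYe hZe.
    case: (eqVneq x f) => [->|_]; first by rewrite hYf hZf.
    by [].
  rewrite -(card_in_imset inj).
  have -> : 2 ^ (#|T| - 2) = #|powerset (~: [set e; f])|.
    have h := cardsC [set e; f]; rewrite cards2 ef in h.
    by rewrite card_powerset -h addKn.
  apply: subset_leq_card; apply/subsetP => W /imsetP[Y _ ->].
  rewrite powersetE; apply/subsetP => x; rewrite !inE.
  by case/andP.
Qed.

Lemma pow_cases (k n : nat) : 2 <= n -> k <= n - 1 -> n - 1 - k != 1 ->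
  2 ^ k = 2 * 2 ^ (n - 2) \/ 2 * 2 ^ k <= 2 ^ (n - 2).
Proof.
  move=> hn hk hne.
  have [->|hk'] := eqVneq k (n - 1).
    by left; rewrite -expnS; congr (2 ^ _); lia.
  by right; rewrite -expnS leq_exp2l //; lia.
Qed.

Lemma subC1 (T : finType) (Y : {set T}) (e : T) : (Y \subset ~: [set e]) = (e \notin Y).
Proof.
  apply/subsetP/idP => [h|h x].
    by apply/negP => /h; rewrite !inE eqxx.
  rewrite !inE => hx; apply/eqP => hxe; move: h; by rewrite -hxe hx.
Qed.

Lemma cnt_e (T : finType) (S : {set {set T}}) (e f : T) :
  count_below S (~: [set e]) =
  #|[set Y in S | (e \in Y == false) && (f \in Y == false)]| +
  #|[set Y in S | (e \in Y == false) && (f \in Y == true)]|.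
Proof.
  rewrite /count_below.
  rewrite -(cardsID [set Y : {set T} | f \in Y] [set Y in S | Y \subset ~: [set e]]).
  rewrite addnC. congr (_ + _); apply: eq_card => Y; rewrite !inE subC1;
  by case: (Y \in S); case: (e \in Y); case: (f \in Y).
Qed.

Lemma cnt_all (T : finType) (S : {set {set T}}) (e f : T) :
  #|S| =
  #|[set Y in S | (e \in Y == false) && (f \in Y == false)]| +
  #|[set Y in S | (e \in Y == false) && (f \in Y == true)]| +
  (#|[set Y in S | (e \in Y == true) && (f \in Y == false)]| +
  #|[set Y in S | (e \in Y == true) && (f \in Y == true)]|).
Proof.
  rewrite -(cardsID [set Y : {set T} | e \in Y] S).
  rewrite addnC.
  rewrite -(cardsID [set Y : {set T} | f \in Y] (S :\: _)).
  rewrite -(cardsID [set Y : {set T} | f \in Y] (S :&: _)).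
  rewrite [X in X + _ = _]addnC [X in _ + X = _]addnC.
  congr ((_ + _) + (_ + _)); apply: eq_card => Y; rewrite !inE;
  by case: (Y \in S); case: (e \in Y); case: (f \in Y).
Qed.

Theorem lemma1 (T : finType) (n : nat) (S : {set {set T}}) :
  #|T| = n -> powerful S -> rankS S [set: T] = n - 1 ->
  forall e f : T, rankS S [set e] != 1 -> rankS S [set f] != 1 -> e = f.
Proof.
  move=> hn hP hr e f he hf.
  apply/eqP; apply/negP => /negP ef.
  have n2 : 2 <= n.
    by have := subset_leq_card (subsetT [set e; f]); rewrite cardsT cards2 ef -hn.
  have S0 : set0 \in S.
    have [k hk] := hP set0.
    have : 0 < count_below S set0 by rewrite hk expn_gt0.
    rewrite /count_below card_gt0 => /set0Pn[Y]; rewrite !inE subset0.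
    by case/andP => hY /eqP hY0; rewrite -hY0.
  have C0 : count_below S set0 = 1.
    rewrite /count_below -(cards1 (set0 : {set T})); apply: eq_card => Y.
    rewrite !inE subset0.
    by case: eqP => [->|]; rewrite ?S0 ?andbF.
  have [j hj] := hP setT.
  have hS : #|S| = 2 ^ j.
    rewrite -hj /count_below; apply: eq_card => Y; rewrite !inE subsetT.
    by rewrite andbT.
  move: hr; rewrite /rankS setCT C0 hS trunc_log1 trunc_expnK // subn0 => hj1.
  have kf : forall g : T, rankS S [set g] != 1 ->
      count_below S (~: [set g]) = 2 * 2 ^ (n - 2) \/
      2 * count_below S (~: [set g]) <= 2 ^ (n - 2).
    move=> g hg.
    have [k hk] := hP (~: [set g]).
    have hle : 2 ^ k <= 2 ^ j.
      rewrite -hk -hS /count_below; apply: subset_leq_card.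
      by apply/subsetP => Y; rewrite inE => /andP[].
    rewrite leq_exp2l // in hle.
    move: hg; rewrite /rankS hS hk !trunc_expnK // hj1 => hg.
    apply: pow_cases => //; lia.
  have Hse := kf e he. have Hsf := kf f hf.
  rewrite (cnt_e _ S e f) in Hse.
  have eqf : count_below S (~: [set f]) =
    #|[set Y in S | (e \in Y == false) && (f \in Y == false)]| +
    #|[set Y in S | (e \in Y == true) && (f \in Y == false)]|.
    rewrite (cnt_e _ S f e); congr (_ + _); apply: eq_card => Y; rewrite !inE;
    by case: (Y \in S); case: (e \in Y); case: (f \in Y).
  rewrite eqf in Hsf.
  have hall := cnt_all _ S e f.
  rewrite hS in hall.
  have hm : 2 ^ j = 2 * 2 ^ (n - 2) by rewrite -expnS; congr (2 ^ _); lia.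
  have b00 := @quad _ e f ef false false S.
  have b01 := @quad _ e f ef false true S.
  have b10 := @quad _ e f ef true false S.
  have b11 := @quad _ e f ef true true S.
  have p00 : 0 < #|[set Y in S | (e \in Y == false) && (f \in Y == false)]|.
    by apply/card_gt0P; exists set0; rewrite !inE S0.
  have mpos : 0 < 2 ^ (n - 2) by rewrite expn_gt0.
  rewrite hn in b00 b01 b10 b11.
  lia.
Qed.
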